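(* Let $G$ be a graph of order $n\geq 2$. Then $q_{2}(G)=n-2$ if and only if the complement $\overline{G}$ has a balanced bipartite component or has at least two bipartite components.
   Context: All graphs are finite and simple. For a graph $G$ with adjacency matrix $A$ and diagonal degree matrix $D$, the signless Laplacian is $Q(G)=A+D$; its eigenvalues are denoted $q_1(G)\geq q_2(G)\geq\cdots\geq q_n(G)$. $\overline{G}$ denotes the complement of $G$. A connected bipartite graph is called balanced if its two vertex classes have equal size, and unbalanced otherwise; an isolated vertex is considered to be an (unbalanced) bipartite component with one empty vertex class. A bipartite component of a graph means a connected component that is bipartite (including isolated vertices). *)

(* Defs.v *)
From HB Require Import structures.
From mathcomp Require Import all_boot all_order all_algebra all_field.
Set Implicit Arguments. Unset Strict Implicit. Unset Printing Implicit Defensive.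
Import Order.TTheory GRing.Theory Num.Theory.

Definition simple_graph (n : nat) (e : rel 'I_n) : Prop :=
  irreflexive e /\ symmetric e.

Definition compl_graph (n : nat) (e : rel 'I_n) : rel 'I_n :=
  fun i j => (i != j) && ~~ e i j.

Definition degree (n : nat) (e : rel 'I_n) (i : 'I_n) : nat :=
  #|[set j | e i j]|.

Local Open Scope ring_scope.

Definition adj_mx (n : nat) (e : rel 'I_n) : 'M[algC]_n :=
  \matrix_(i, j) (e i j)%:R.

Definition deg_mx (n : nat) (e : rel 'I_n) : 'M[algC]_n :=
  \matrix_(i, j) ((i == j)%:R * (degree e i)%:R).

Definition signless_laplacian (n : nat) (e : rel 'I_n) : 'M[algC]_n :=
  adj_mx e + deg_mx e.

Definition eigenvalues (n : nat) (M : 'M[algC]_n) : seq algC :=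
  sval (closed_field_poly_normal (char_poly M)).

(* Q-spectrum sorted in nonincreasing order q_1 >= q_2 >= ... >= q_n
   (all eigenvalues of the real symmetric matrix Q are real, so this
   relation is total on them). *)
Definition Qspectrum (n : nat) (e : rel 'I_n) : seq algC :=
  sort (fun x y : algC => y <= x) (eigenvalues (signless_laplacian e)).

(* q_k(G), 1-indexed *)
Definition qeig (n : nat) (e : rel 'I_n) (k : nat) : algC :=
  nth 0 (Qspectrum e) k.-1.

Local Close Scope ring_scope.

Definition component (n : nat) (e : rel 'I_n) (v : 'I_n) : {set 'I_n} :=
  [set w | connect e v w].

Definition bipartite_on (n : nat) (e : rel 'I_n) (C : {set 'I_n})
  (c : 'I_n -> bool) : Prop :=
  forall x y, x \in C -> y \in C -> e x y -> c x != c y.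

Definition bipartite_component (n : nat) (e : rel 'I_n) (v : 'I_n) : Prop :=
  exists c, bipartite_on e (component e v) c.

(* balanced: a proper 2-colouring with equal colour classes (for a connected
   bipartite graph the bipartition is unique up to swapping) *)
Definition balanced_bipartite_component (n : nat) (e : rel 'I_n) (v : 'I_n)
  : Prop :=
  exists c, bipartite_on e (component e v) c /\
    #|[set w in component e v | c w]| = #|[set w in component e v | ~~ c w]|.

Definition has_two_bipartite_components (n : nat) (e : rel 'I_n) : Prop :=
  exists u v, ~~ connect e u v /\ bipartite_component e u /\
              bipartite_component e v.

(* Main.v *)
From Stdlib Require Import ZArith Lia Psatz.
Require Import Defs.
From HB Require Import structures.
From mathcomp Require Import all_boot all_order all_algebra all_field.
From mathcomp Require Import sesquilinear spectral ring zify.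
Set Implicit Arguments. Unset Strict Implicit. Unset Printing Implicit Defensive.
Import Order.TTheory GRing.Theory Num.Theory.
Local Open Scope ring_scope.
Local Open Scope sesquilinear_scope.

Definition qf n (A : 'M[algC]_n) (u : 'rV[algC]_n) : algC := (u *m A *m u ^t*) 0 0.
Definition nrm n (u : 'rV[algC]_n) : algC := (u *m u ^t*) 0 0.

Lemma nrmE n (u : 'rV[algC]_n) : nrm u = \sum_i u 0 i * (u 0 i)^*.
Proof. by rewrite /nrm mxE; apply: eq_bigr => i _; rewrite !mxE. Qed.

Lemma tC_mul m n p (A : 'M[algC]_(m, n)) (B : 'M[algC]_(n, p)) :
  (A *m B)^t* = B^t* *m A^t*.
Proof. by rewrite trmx_mul map_mxM. Qed.

Lemma spec_dec n (A : 'M[algC]_n) : A \is hermsymmx ->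
  A = (spectralmx A)^t* *m diag_mx (spectral_diag A) *m spectralmx A.
Proof.
move=> H; rewrite -invmx_unitary ?spectral_unitarymx //.
exact/orthomx_spectralP/hermitian_normalmx.
Qed.

Lemma spec_PPt n (A : 'M[algC]_n) : spectralmx A *m (spectralmx A)^t* = 1%:M.
Proof. exact/unitarymxP/spectral_unitarymx. Qed.

Lemma spec_PtP n (A : 'M[algC]_n) : (spectralmx A)^t* *m spectralmx A = 1%:M.
Proof. exact/mulmx1C/spec_PPt. Qed.

Lemma qf_spec n (A : 'M[algC]_n) : A \is hermsymmx -> forall u,
  qf A u = \sum_i spectral_diag A 0 i *
     ((u *m (spectralmx A)^t*) 0 i * ((u *m (spectralmx A)^t*) 0 i)^*).
Proof.
move=> H u; rewrite /qf {1}(spec_dec H).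
set P := spectralmx A; set z := u *m P^t*.
have -> : u *m (P^t* *m diag_mx (spectral_diag A) *m P) *m u^t*
   = z *m diag_mx (spectral_diag A) *m z^t*.
  by rewrite /z tC_mul trmxCK !mulmxA.
rewrite mxE; apply: eq_bigr => i _; rewrite mul_mx_diag !mxE; ring.
Qed.

Lemma nrm_spec n (A : 'M[algC]_n) u :
  nrm u = nrm (u *m (spectralmx A)^t*).
Proof.
rewrite /nrm tC_mul trmxCK -[u *m _ *m _]mulmxA [_^t* *m (_ *m _)]mulmxA.
by rewrite spec_PtP mul1mx.
Qed.

Lemma char_poly_conj n (P Pt D : 'M[algC]_n) : Pt *m P = 1%:M ->
  char_poly (Pt *m D *m P) = char_poly D.
Proof.
move=> PtP; rewrite /char_poly.
set f := (@polyC algC).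
have E1 : map_mx f Pt *m map_mx f P = 1%:M by rewrite -map_mxM PtP map_mx1.
have E2 : map_mx f P *m map_mx f Pt = 1%:M by exact: mulmx1C.
have -> : char_poly_mx (Pt *m D *m P) = map_mx f Pt *m char_poly_mx D *m map_mx f P.
  rewrite /char_poly_mx mulmxBr mulmxBl !map_mxM.
  by rewrite mul_mx_scalar -scalemxAl E1 scalemx1.
rewrite !det_mulmx mulrC mulrA -det_mulmx E2 det1 mul1r //.
Qed.

Definition spec_list n (A : 'M[algC]_n) : seq algC :=
  [seq spectral_diag A 0 i | i <- enum 'I_n].

Lemma char_poly_herm n (A : 'M[algC]_n) : A \is hermsymmx ->
  char_poly A = \prod_(x <- spec_list A) ('X - x%:P).
Proof.
move=> H; rewrite {1}(spec_dec H) char_poly_conj ?spec_PtP //.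
rewrite char_poly_trig ?diag_mx_is_trig // /spec_list big_map big_enum /=.
by apply: eq_bigr => i _; rewrite !mxE eqxx mulr1n.
Qed.

Lemma eigen_perm n (A : 'M[algC]_n) : A \is hermsymmx ->
  perm_eq (eigenvalues A) (spec_list A).
Proof.
move=> H; apply: prod_XsubC_eq; rewrite -char_poly_herm //.
rewrite /eigenvalues; case: closed_field_poly_normal => r /= ->.
by rewrite (monicP (char_poly_monic A)) scale1r.
Qed.

Lemma spec_real n (A : 'M[algC]_n) : A \is hermsymmx -> forall i,
  spectral_diag A 0 i \is Num.real.
Proof.
by move=> H i; have /mxOverP := hermitian_spectral_diag_real H; apply.
Qed.

Lemma sum_two n (F : 'I_n -> algC) i j : i != j ->
  (forall k, k != i -> k != j -> F k = 0) -> \sum_k F k = F i + F j.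
Proof.
move=> ij H; rewrite (bigD1 i) //= (bigD1 j) 1?eq_sym //= big1 ?addr0 //.
by move=> k /andP[ki kj]; apply: H.
Qed.

Lemma spec_two_upper n (A : 'M[algC]_n) : A \is hermsymmx -> forall i j, i != j ->
  exists u : 'rV[algC]_n, exists a b : algC,
   [/\ u != 0, \sum_k u 0 k = 0,
       qf A u = spectral_diag A 0 i * (a * a^*) + spectral_diag A 0 j * (b * b^*)
     & nrm u = a * a^* + b * b^*].
Proof.
move=> H i j ij.
set P := spectralmx A.
pose s k := \sum_l P k l.
have [[a b] /= [ab0 sab]] : exists ab : algC * algC,
    ((ab.1 != 0) || (ab.2 != 0)) /\ ab.1 * s i + ab.2 * s j = 0.
  case: (eqVneq (s i) 0) => si; case: (eqVneq (s j) 0) => sj.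
  - by exists (1, 0); rewrite si sj /= oner_eq0; split => //; ring.
  - by exists (s j, - s i); rewrite /= sj; split => //; ring.
  - by exists (s j, - s i); rewrite /= oppr_eq0 si orbT; split => //; ring.
  - by exists (s j, - s i); rewrite /= sj; split => //; ring.
pose u := a *: row i P + b *: row j P.
have zu : u *m P^t* = a *: delta_mx 0 i + b *: delta_mx 0 j.
  by rewrite mulmxDl -!scalemxAl -!row_mul spec_PPt !row1.
have zk k : (u *m P^t*) 0 k = a * (k == i)%:R + b * (k == j)%:R.
  by rewrite zu !mxE.
have zi : (u *m P^t*) 0 i = a by rewrite zk eqxx (negbTE ij) /= mulr1 mulr0 addr0.
have zj : (u *m P^t*) 0 j = b by rewrite zk eqxx eq_sym (negbTE ij) /= mulr1 mulr0 add0r.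
have zo k : k != i -> k != j -> (u *m P^t*) 0 k = 0.
  by move=> ki kj; rewrite zk (negbTE ki) (negbTE kj) /= !mulr0 addr0.
exists u, a, b; split.
- apply/eqP => u0; move: zi zj; rewrite u0 mul0mx !mxE => a0 b0.
  by move: ab0; rewrite -a0 -b0 eqxx.
- rewrite /u; under eq_bigr => k _ do rewrite !mxE.
  by rewrite big_split /= -!mulr_sumr.
- rewrite qf_spec // (sum_two ij) ?zi ?zj //.
  by move=> k ki kj; rewrite zo // mul0r mulr0.
- rewrite (nrm_spec A) nrmE (sum_two ij) ?zi ?zj //.
  by move=> k ki kj; rewrite zo // mul0r.
Qed.

Lemma spec_neg n (A : 'M[algC]_n) (c : algC) : A \is hermsymmx -> c \is Num.real ->
  forall w : 'rV[algC]_n, w != 0 ->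
  (forall k, (w *m (spectralmx A)^t*) 0 k = 0 \/ spectral_diag A 0 k < c) ->
  qf A w < c * nrm w.
Proof.
move=> H cR w w0 Hk.
set P := spectralmx A.
have lamR k : spectral_diag A 0 k \is Num.real := spec_real H k.
set z := w *m P^t*.
have z0 : z != 0.
  apply: contra w0 => /eqP z0.
  by rewrite -(mulmx1 w) -(spec_PtP A) mulmxA -/P -/z z0 mul0mx.
have [k zk] : exists k, z 0 k != 0.
  apply/existsP; move: z0; apply: contraNT; rewrite negb_exists => /forallP Hz.
  apply/eqP/rowP => k.
  by have := Hz k; rewrite negbK !mxE => /eqP.
rewrite qf_spec // (nrm_spec A) nrmE -/P -/z mulr_sumr -subr_gt0 -sumrB.
rewrite (bigD1 k) //=; apply: ltr_pwDl.
  have [zk0|lk] := Hk k; first by rewrite zk0 eqxx in zk.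
  by rewrite -mulrBl mulr_gt0 ?subr_gt0 // mul_conjC_gt0.
rewrite sumr_ge0 // => i _.
have [zi0|li] := Hk i; first by rewrite zi0 !mul0r !mulr0 subrr.
by rewrite -mulrBl mulr_ge0 ?mul_conjC_ge0 // subr_ge0 ltW.
Qed.

Lemma spec_two_lower n (A : 'M[algC]_n) (c : algC) : A \is hermsymmx ->
  c \is Num.real -> forall x y : 'rV[algC]_n,
  (forall a b, a *: x + b *: y = 0 -> a = 0 /\ b = 0) ->
  (forall a b, c * nrm (a *: x + b *: y) <= qf A (a *: x + b *: y)) ->
  exists i j, [/\ i != j, c <= spectral_diag A 0 i & c <= spectral_diag A 0 j].
Proof.
move=> H cR x y indep Hq.
set P := spectralmx A.
have lamR k : spectral_diag A 0 k \is Num.real := spec_real H k.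
case: (boolP [exists i, exists j, [&& i != j, c <= spectral_diag A 0 i
                                         & c <= spectral_diag A 0 j]]).
  by move=> /existsP[i /existsP[j /and3P[? ? ?]]]; exists i, j.
rewrite negb_exists => /forallP Hn.
have uniqk i j : c <= spectral_diag A 0 i -> c <= spectral_diag A 0 j -> i = j.
  move=> ci cj; apply/eqP; apply: contraT => ij.
  by have := Hn i; rewrite negb_exists => /forallP /(_ j); rewrite ij ci cj.
have coord a b l : ((a *: x + b *: y) *m P^t*) 0 l
    = a * (x *m P^t*) 0 l + b * (y *m P^t*) 0 l.
  by rewrite mulmxDl -!scalemxAl !mxE.
suff [a [b [ab0 Hk]]] : exists a b, (a != 0 \/ b != 0) /\
   forall k, ((a *: x + b *: y) *m P^t*) 0 k = 0 \/ spectral_diag A 0 k < c.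
  have w0 : a *: x + b *: y != 0.
    by apply/eqP => /indep [a0 b0]; case: ab0; rewrite ?a0 ?b0 eqxx.
  have := lt_le_trans (spec_neg H cR w0 Hk) (Hq a b).
  by rewrite ltxx.
case: (pickP (fun k => c <= spectral_diag A 0 k)) => [k ck | none]; last first.
  exists 1, 0; split; first by left; rewrite oner_eq0.
  by move=> l; right; rewrite real_ltNge ?none.
have other l : l != k -> spectral_diag A 0 l < c.
  move=> lk; rewrite real_ltNge //; apply: contra lk => cl.
  by rewrite (uniqk _ _ cl ck).
pose xi := (x *m P^t*) 0 k; pose eta := (y *m P^t*) 0 k.
have [[a b] [ab0 abk]] : exists ab : algC * algC,
    (ab.1 != 0 \/ ab.2 != 0) /\ ab.1 * xi + ab.2 * eta = 0.
  case: (eqVneq xi 0) => xi0; case: (eqVneq eta 0) => eta0.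
  - by exists (1, 0); rewrite xi0 eta0 /= oner_eq0; split; [left|ring].
  - by exists (eta, - xi); split; [left|rewrite /=; ring].
  - by exists (eta, - xi); split; [right; rewrite /= oppr_eq0|rewrite /=; ring].
  - by exists (eta, - xi); split; [left|rewrite /=; ring].
exists a, b; split => // l.
case: (eqVneq l k) => [->|lk]; last by right; apply: other.
by left; rewrite coord.
Qed.

Lemma count0_le (t : seq algC) (b c : algC) : all (fun x => x <= b) t ->
  b < c -> count (fun x => c <= x) t = 0%N.
Proof.
move=> tb bc; apply/eqP; rewrite eqn0Ngt -has_count; apply/hasPn => x xt.
by have := allP tb x xt => xb; rewrite lt_geF // (le_lt_trans xb bc).
Qed.

Lemma count0_lt (t : seq algC) (b : algC) : all (fun x => x <= b) t ->
  count (fun x => b < x) t = 0%N.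
Proof.
move=> tb; apply/eqP; rewrite eqn0Ngt -has_count; apply/hasPn => x xt.
by have := allP tb x xt => xb; rewrite le_gtF.
Qed.

Lemma nth1_sorted (s : seq algC) (c : algC) :
  all (fun x => x \is Num.real) s -> (1 < size s)%N -> c \is Num.real ->
  sorted (fun x y : algC => y <= x) s ->
  (nth 0 s 1 = c <-> (1 < count (fun x => (c <= x)%R) s)%N /\
                     (count (fun x => (c < x)%R) s <= 1)%N).
Proof.
case: s => [|a [|b t]] //= /and3P[aR bR tR] _ cR /andP[ba pt].
have tb : all (fun x => x <= b) t.
  by apply: (order_path_min _ pt) => x y z yx zy; apply: le_trans zy yx.
split.
  move=> <-; rewrite count0_lt // ba lexx lt_irreflexive /= addn0.
  by case: (b < a).
move=> [c2 c1].
have [bc|cb|//] := real_ltgtP bR cR.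
  move: c2; rewrite (count0_le tb bc) addn0 (lt_geF bc) /=.
  by case: (c <= a).
move: c1; rewrite cb (lt_le_trans cb ba).
by [].
Qed.

Lemma cnt_enum n (p : pred 'I_n) : count p (Finite.enum 'I_n) = #|p|.
Proof.
rewrite -enumT cardE /enum_mem -size_filter.
by congr (size (filter _ _)); apply: filter_predT.
Qed.

Lemma two_idx n (p : pred 'I_n) :
  (1 < count p (Finite.enum 'I_n))%N <-> exists i j, [/\ i != j, p i & p j].
Proof.
rewrite cnt_enum; split.
  by move/card_gt1P => [x [y [px py xy]]]; exists x, y.
by move=> [x [y [xy px py]]]; apply/card_gt1P; exists x, y.
Qed.

Lemma qspec_nth1 n (A : 'M[algC]_n) c : A \is hermsymmx -> c \is Num.real ->
  (1 < n)%N ->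
  (nth 0 (sort (fun x y : algC => y <= x) (eigenvalues A)) 1 = c <->
   (exists i j, [/\ i != j, c <= spectral_diag A 0 i & c <= spectral_diag A 0 j]) /\
   ~ (exists i j, [/\ i != j, c < spectral_diag A 0 i & c < spectral_diag A 0 j])).
Proof.
move=> H cR n1.
set s := sort _ _.
have pe := eigen_perm H.
have ps : perm_eq s (spec_list A).
  by apply: perm_trans pe; rewrite perm_sort.
have allR : all (fun x => x \is Num.real) (spec_list A).
  by rewrite /spec_list all_map; apply/allP => i _; exact: spec_real.
have sR : all (fun x => x \is Num.real) s by rewrite (perm_all _ ps).
have sz : (1 < size s)%N by rewrite (perm_size ps) size_map size_enum_ord.
have srt : sorted (fun x y : algC => y <= x) s.
  apply: (@sort_sorted_in _ (fun x : algC => x \is Num.real)).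
    by move=> x y xR yR; rewrite real_leVge.
  by rewrite (perm_all _ pe).
rewrite nth1_sorted // !(permP ps) /spec_list !count_map.
split=> [[c2 c1]|[c2 c1]]; split.
- exact/two_idx.
- by move=> /two_idx; rewrite ltnNge c1.
- exact/two_idx.
- by rewrite leqNgt; apply/negP => /two_idx.
Qed.

Lemma lapE n (f : rel 'I_n) i j :
  signless_laplacian f i j = (f i j)%:R + (i == j)%:R * (degree f i)%:R.
Proof. by rewrite !mxE. Qed.

Lemma lap_herm n (f : rel 'I_n) : symmetric f -> signless_laplacian f \is hermsymmx.
Proof.
move=> fs; apply: realsym_hermsym; last first.
  by apply/mxOverP => i j; rewrite lapE rpredD ?rpredM ?realn.
apply/is_hermitianmxP; rewrite expr0 scale1r; apply/matrixP => i j.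
rewrite !mxE /= fs; case: (eqVneq i j) => [->|ij] //.
by rewrite !mul0r.
Qed.

Lemma qfD n (A B : 'M[algC]_n) u : qf (A + B) u = qf A u + qf B u.
Proof. by rewrite /qf mulmxDr mulmxDl mxE. Qed.

Lemma qfB n (A B : 'M[algC]_n) u : qf (A - B) u = qf A u - qf B u.
Proof. by rewrite /qf mulmxBr mulmxBl mxE mxE mxE. Qed.

Lemma qf_scalar n (a : algC) (u : 'rV[algC]_n) : qf a%:M u = a * nrm u.
Proof. by rewrite /qf mul_mx_scalar -scalemxAl mxE. Qed.

Definition sumv n (u : 'rV[algC]_n) := \sum_i u 0 i.

Lemma qf_J n (u : 'rV[algC]_n) : qf (const_mx 1) u = sumv u * (sumv u)^*.
Proof.
rewrite /qf /sumv mxE rmorph_sum mulr_sumr; apply: eq_bigr => k _.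
rewrite !mxE; congr (_ * _); apply: eq_bigr => i _.
by rewrite !mxE mulr1.
Qed.

Lemma deg_sum n (e : rel 'I_n) i : simple_graph e ->
  (degree e i + degree (compl_graph e) i = n.-1)%N.
Proof.
move=> [ei es]; rewrite /degree -[in RHS](card_ord n) -(cardsC1 i).
rewrite -(cardsID [set j | e i j] [set~ i]); congr (_ + _); apply: eq_card => j.
  rewrite !inE; case eij: (e i j); rewrite ?andbT ?andbF //.
  by apply/esym/eqP => ji; rewrite ji ei in eij.
by rewrite !inE /compl_graph eq_sym andbC.
Qed.

Lemma lap_sum n (e : rel 'I_n) : simple_graph e -> (0 < n)%N ->
  signless_laplacian e + signless_laplacian (compl_graph e)
  = const_mx 1 + (n%:R - 2)%:M.
Proof.
move=> se n0; have [ei es] := se.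
apply/matrixP => i j; rewrite !mxE addrACA -mulrDr -natrD.
rewrite -(natrD _ (degree e i)) deg_sum //.
case: (eqVneq i j) => [<-|ij] /=.
  rewrite ei /compl_graph eqxx /= add0r mul1r mulr1n -subn1 natrB //.
  ring.
rewrite /compl_graph ij /= mul0r mulr0n !addr0.
by case: (e i j).
Qed.

Lemma qf_lap n (e : rel 'I_n) u : simple_graph e -> (0 < n)%N ->
  qf (signless_laplacian e) u =
  sumv u * (sumv u)^* + (n%:R - 2) * nrm u - qf (signless_laplacian (compl_graph e)) u.
Proof.
move=> se n0.
have -> : signless_laplacian e = const_mx 1 + (n%:R - 2)%:M
   - signless_laplacian (compl_graph e).
  by rewrite -(lap_sum se n0) addrK.
by rewrite qfB qfD qf_J qf_scalar.
Qed.

Lemma degE n (f : rel 'I_n) i : (degree f i)%:R = \sum_j ((f i j)%:R : algC).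
Proof.
rewrite /degree -sum1_card natr_sum big_mkcond /=; apply: eq_bigr => j _.
by rewrite inE; case: (f i j).
Qed.

Lemma sum_delta n (G : 'I_n -> algC) k : \sum_i (i == k)%:R * G i = G k.
Proof.
rewrite (bigD1 k) //= eqxx mul1r big1 ?addr0 // => i /negbTE ->.
by rewrite mul0r.
Qed.

Lemma qf_edges n (f : rel 'I_n) (u : 'rV[algC]_n) : symmetric f ->
  2 * qf (signless_laplacian f) u =
  \sum_i \sum_j (f i j)%:R * ((u 0 i + u 0 j) * (u 0 i + u 0 j)^*).
Proof.
move=> fs.
pose X := \sum_i \sum_j ((f i j)%:R : algC) * (u 0 i * (u 0 i)^*).
pose Y := \sum_i \sum_j ((f i j)%:R : algC) * (u 0 i * (u 0 j)^*).
have qfE : qf (signless_laplacian f) u = Y + X.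
  rewrite /qf mxE.
  transitivity (\sum_k \sum_i (((f i k)%:R * (u 0 i * (u 0 k)^*)) +
                    (i == k)%:R * ((degree f i)%:R * (u 0 i * (u 0 i)^*)))).
    apply: eq_bigr => k _; rewrite !mxE mulr_suml; apply: eq_bigr => i _.
    rewrite !mxE; case: (eqVneq i k) => [->|ik]; rewrite /= ?mul0r ?mul1r; ring.
  under eq_bigr => k _ do rewrite big_split /=.
  rewrite big_split /= /Y /X exchange_big /=; congr (_ + _).
  apply: eq_bigr => k _; rewrite sum_delta degE mulr_suml.
  by apply: eq_bigr => j _.
have X' : \sum_i \sum_j ((f i j)%:R : algC) * (u 0 j * (u 0 j)^*) = X.
  rewrite exchange_big /X; apply: eq_bigr => i _; apply: eq_bigr => j _.
  by rewrite fs.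
have Y' : \sum_i \sum_j ((f i j)%:R : algC) * (u 0 j * (u 0 i)^*) = Y.
  rewrite exchange_big /Y; apply: eq_bigr => i _; apply: eq_bigr => j _.
  by rewrite fs.
transitivity (\sum_i \sum_j (((f i j)%:R * (u 0 i * (u 0 i)^*) +
                 (f i j)%:R * (u 0 j * (u 0 j)^*)) +
                ((f i j)%:R * (u 0 i * (u 0 j)^*) +
                 (f i j)%:R * (u 0 j * (u 0 i)^*)) : algC)); last first.
  apply: eq_bigr => i _; apply: eq_bigr => j _; rewrite rmorphD /=; ring.
under eq_bigr => i _ do rewrite big_split /= big_split /= big_split /=.
rewrite !big_split /= X' Y' qfE -/X -/Y; ring.
Qed.

Definition good n (f : rel 'I_n) (u : 'rV[algC]_n) :=
  forall i j, f i j -> u 0 i + u 0 j = 0.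

Lemma qf_ge0 n (f : rel 'I_n) u : symmetric f -> 0 <= qf (signless_laplacian f) u.
Proof.
move=> fs; have := qf_edges u fs.
have -> : \sum_i \sum_j ((f i j)%:R * ((u 0 i + u 0 j) * (u 0 i + u 0 j)^*)) =
          `| \sum_i \sum_j ((f i j)%:R * ((u 0 i + u 0 j) * (u 0 i + u 0 j)^*)) | :> algC.
  apply/esym/ger0_norm; apply: sumr_ge0 => i _; apply: sumr_ge0 => j _.
  by rewrite mulr_ge0 ?ler0n ?mul_conjC_ge0.
move=> h; have : 0 <= 2 * qf (signless_laplacian f) u by rewrite h.
by rewrite pmulr_rge0.
Qed.

Lemma qf_eq0_good n (f : rel 'I_n) u : symmetric f ->
  qf (signless_laplacian f) u = 0 -> good f u.
Proof.
move=> fs h i j fij; have := qf_edges u fs; rewrite h mulr0 => /esym h2.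
have nn k l : 0 <= ((f k l)%:R * ((u 0 k + u 0 l) * (u 0 k + u 0 l)^*) : algC).
  by rewrite mulr_ge0 ?ler0n ?mul_conjC_ge0.
have h4 := psumr_eq0P (fun k _ => sumr_ge0 _ (fun l _ => nn k l)) h2 (i:=i) isT.
have := psumr_eq0P (fun l _ => nn i l) h4 (i:=j) isT; rewrite fij mul1r.
by move=> /eqP; rewrite mul_conjC_eq0 => /eqP.
Qed.

Lemma qf_comb n (f : rel 'I_n) (x y : 'rV[algC]_n) a b : symmetric f -> good f y ->
  2 * qf (signless_laplacian f) (a *: x + b *: y)
  = a * a^* * (2 * qf (signless_laplacian f) x).
Proof.
move=> fs gy; rewrite !qf_edges // mulr_sumr; apply: eq_bigr => i _.
rewrite mulr_sumr; apply: eq_bigr => j _; rewrite !mxE.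
case fij: (f i j); last by rewrite !mul0r mulr0.
have E : a * x 0 i + b * y 0 i + (a * x 0 j + b * y 0 j)
       = a * (x 0 i + x 0 j) + b * (y 0 i + y 0 j) by ring.
by rewrite E (gy i j fij) mulr0 addr0 rmorphM /=; ring.
Qed.

Definition closed_set n (f : rel 'I_n) (S : {set 'I_n}) :=
  forall i j, f i j -> (i \in S) = (j \in S).

Definition proper_on n (f : rel 'I_n) (S : {set 'I_n}) (col : 'I_n -> bool) :=
  forall i j, i \in S -> j \in S -> f i j -> col i != col j.

Lemma bip_deg n (f : rel 'I_n) S col : closed_set f S -> proper_on f S col ->
  (4 * \sum_(i in S) degree f i <= 2 * (#|S| * #|S|))%N.
Proof.
move=> cS pS.
set a := #|[set x | (x \in S) && col x]|.
set b := #|[set x | (x \in S) && ~~ col x]|.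
have cardS : #|S| = (a + b)%N.
  rewrite -(cardsID [set x | col x] S) /a /b.
  by congr (_ + _); apply: eq_card => x; rewrite !inE // andbC.
have H : (\sum_(i in S) degree f i <= a * b + b * a)%N.
  apply: (@leq_trans (\sum_(i in S) (if col i then b else a))).
    apply: leq_sum => i iS; rewrite /degree; case ci: (col i).
      apply: subset_leq_card; apply/subsetP => j; rewrite !inE => fij.
      rewrite -(cS _ _ fij) iS /=; have := pS _ _ iS _ fij.
      by rewrite -(cS _ _ fij) ci => /(_ iS); case: (col j).
    apply: subset_leq_card; apply/subsetP => j; rewrite !inE => fij.
    rewrite -(cS _ _ fij) iS /=; have := pS _ _ iS _ fij.
    by rewrite -(cS _ _ fij) ci => /(_ iS); case: (col j).
  rewrite (bigID col) /=.
  rewrite (eq_bigr (fun _ => b)); last by move=> i /andP[_ ->].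
  rewrite [X in (_ + X <= _)%N](eq_bigr (fun _ => a)); last by move=> i /andP[_ /negbTE ->].
  by rewrite !sum_nat_cond_const.
rewrite cardS; apply: (leq_trans (leq_mul (leqnn 4) H)).
clearbody a b; clear.
have h : Z.le 0 (Z.mul (Z.sub (Z.of_nat a) (Z.of_nat b)) (Z.sub (Z.of_nat a) (Z.of_nat b))).
  exact: Z.square_nonneg.
nia.
Qed.

Definition ind n (S : {set 'I_n}) : 'rV[algC]_n := \row_i ((i \in S)%:R).

Lemma qf_ind n (f : rel 'I_n) S : symmetric f -> closed_set f S ->
  2 * qf (signless_laplacian f) (ind S) = (4 * \sum_(i in S) degree f i)%:R.
Proof.
move=> fs cS; rewrite qf_edges //.
transitivity (\sum_i ((i \in S)%:R * (4 * (degree f i)%:R)) : algC).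
  apply: eq_bigr => i _; rewrite degE !mulr_sumr; apply: eq_bigr => j _.
  rewrite !mxE; case fij: (f i j); last by rewrite !mul0r !mulr0.
  rewrite -(cS _ _ fij); case: (i \in S) => /=.
    by rewrite rmorphD /= rmorph1; ring.
  by rewrite !addr0 !mul0r !mulr0.
rewrite (natrM _ 4) natr_sum mulr_sumr [RHS]big_mkcond /=; apply: eq_bigr => i _.
by case: (i \in S); rewrite ?mul1r ?mul0r ?mulr0.
Qed.

Lemma sumvD n a b (x y : 'rV[algC]_n) : sumv (a *: x + b *: y) = a * sumv x + b * sumv y.
Proof.
rewrite /sumv !mulr_sumr -big_split; apply: eq_bigr => i _; by rewrite !mxE.
Qed.

Lemma sumv_ind n (S : {set 'I_n}) : sumv (ind S) = #|S|%:R.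
Proof.
rewrite /sumv -sum1_card natr_sum [RHS]big_mkcond /=; apply: eq_bigr => i _.
by rewrite mxE; case: (i \in S).
Qed.

Lemma lower_bound n (e : rel 'I_n) S col (y : 'rV[algC]_n) :
  simple_graph e -> (0 < n)%N ->
  closed_set (compl_graph e) S -> proper_on (compl_graph e) S col ->
  good (compl_graph e) y -> sumv y = 0 -> forall a b,
  (n%:R - 2) * nrm (a *: ind S + b *: y)
    <= qf (signless_laplacian e) (a *: ind S + b *: y).
Proof.
move=> se n0 cS pS gy sy a b.
have cs : symmetric (compl_graph e).
  by move=> i j; rewrite /compl_graph eq_sym (proj2 se).
rewrite qf_lap // addrAC lerDr subr_ge0 sumvD sy mulr0 addr0 sumv_ind.
rewrite -(ler_pM2l (_ : 0 < 2)) ?ltr0n // qf_comb // qf_ind //.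
rewrite rmorphM /= conjC_nat.
have h := bip_deg cS pS.
have : ((4 * \sum_(i in S) degree (compl_graph e) i)%:R <= (2 * (#|S| * #|S|))%:R :> algC).
  by rewrite ler_nat.
move=> h2; apply: le_trans (ler_wpM2l (mul_conjC_ge0 a) h2) _.
rewrite natrM natrM le_eqVlt; apply/orP; left; apply/eqP; ring.
Qed.

Lemma sum_sign n (C : {set 'I_n}) (col : 'I_n -> bool) (t : algC) :
  \sum_(x in C) (if col x then t else - t) =
  t * (#|[set x in C | col x]|%:R - #|[set x in C | ~~ col x]|%:R).
Proof.
rewrite (bigID col) /=.
under [X in X + _]eq_bigr => i /andP[_ ci] do rewrite ci.
under [X in _ + X]eq_bigr => i /andP[_ /negbTE ci] do rewrite ci.
have E1 : \sum_(i | (i \in C) && col i) t = t *+ #|[set x in C | col x]|.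
  by rewrite -sumr_const; apply: eq_bigl => i /=; rewrite inE.
have E2 : \sum_(i | (i \in C) && ~~ col i) (- t) = (- t) *+ #|[set x in C | ~~ col x]|.
  by rewrite -sumr_const; apply: eq_bigl => i /=; rewrite inE.
by rewrite E1 E2 mulrBr !mulr_natr mulNrn.
Qed.

Lemma sym_compl n (e : rel 'I_n) : simple_graph e -> symmetric (compl_graph e).
Proof. by move=> se i j; rewrite /compl_graph eq_sym (proj2 se). Qed.

Lemma comp_closed n (f : rel 'I_n) v : symmetric f -> closed_set f (component f v).
Proof.
move=> fs i j fij; rewrite !inE; apply/idP/idP => h.
  by apply: connect_trans h (connect1 fij).
by rewrite fs in fij; apply: connect_trans h (connect1 fij).
Qed.

Lemma good_conn n (f : rel 'I_n) (w : 'rV[algC]_n) a b : symmetric f -> good f w ->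
  connect f a b -> (w 0 b == w 0 a) || (w 0 b == - w 0 a).
Proof.
move=> fs gw ab.
pose p := [pred x | (w 0 x == w 0 a) || (w 0 x == - w 0 a)].
have cp : closed f p.
  move=> x y fxy; rewrite !inE.
  have -> : w 0 y = - w 0 x by apply/eqP; rewrite -addr_eq0 addrC (gw _ _ fxy).
  by rewrite eqr_oppLR eqr_opp orbC.
have := closed_connect cp ab; rewrite !inE eqxx /= => <-.
by [].
Qed.


Lemma neq_opp (z : algC) : z != 0 -> z != - z.
Proof.
move=> z0; apply: contra z0 => /eqP h.
have : z *+ 2 == 0 by rewrite mulr2n {1}h addNr.
by rewrite mulrn_eq0.
Qed.

Lemma good_bip n (f : rel 'I_n) (w : 'rV[algC]_n) a : symmetric f -> good f w ->
  w 0 a != 0 -> bipartite_on f (component f a) (fun x => w 0 x == w 0 a).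
Proof.
move=> fs gw wa x y; rewrite inE => ax; rewrite inE => ay fxy.
have wy : w 0 y = - w 0 x by apply/eqP; rewrite -addr_eq0 addrC (gw _ _ fxy).
have wa2 := neq_opp wa.
case/orP: (good_conn fs gw ax) => /eqP hx; rewrite wy hx.
  by rewrite eqxx; case: (@eqP _ (- w 0 a) (w 0 a)) => // h; rewrite h eqxx in wa2.
by rewrite opprK eqxx; case: (@eqP _ (- w 0 a) (w 0 a)) => // h; rewrite h eqxx in wa2.
Qed.

Lemma nonzero_entry n (w : 'rV[algC]_n) : w != 0 -> exists a, w 0 a != 0.
Proof.
move=> w0; apply/existsP; move: w0; apply: contraNT.
rewrite negb_exists => /forallP Hz; apply/eqP/rowP => k.
by have := Hz k; rewrite negbK !mxE => /eqP.
Qed.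

Lemma from_vec n (e : rel 'I_n) (w : 'rV[algC]_n) : simple_graph e -> w != 0 ->
  good (compl_graph e) w -> sumv w = 0 ->
  (exists v, balanced_bipartite_component (compl_graph e) v) \/
  has_two_bipartite_components (compl_graph e).
Proof.
move=> se w0 gw sw.
have fs : symmetric (compl_graph e) := sym_compl se.
have [a wa] := nonzero_entry w0.
have bip := good_bip fs gw wa.
have wa2 := neq_opp wa.
case: (eqVneq #|[set x in component (compl_graph e) a | w 0 x == w 0 a]|
              #|[set x in component (compl_graph e) a | ~~ (w 0 x == w 0 a)]|) => bal.
  by left; exists a, (fun x => w 0 x == w 0 a).
right.
have sC : \sum_(x in component (compl_graph e) a) w 0 x =
   w 0 a * (#|[set x in component (compl_graph e) a | w 0 x == w 0 a]|%:R -
            #|[set x in component (compl_graph e) a | ~~ (w 0 x == w 0 a)]|%:R).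
  rewrite -sum_sign; apply: eq_bigr => x; rewrite inE => ax.
  case/orP: (good_conn fs gw ax) => /eqP ->; first by rewrite eqxx.
  by rewrite eq_sym (negbTE wa2).
have sC0 : \sum_(x in component (compl_graph e) a) w 0 x != 0.
  by rewrite sC mulf_neq0 // subr_eq0 eqr_nat.
move: sw; rewrite /sumv (bigID (fun x => x \in component (compl_graph e) a)) /=.
case: (pickP (fun b => (b \notin component (compl_graph e) a) && (w 0 b != 0)))
  => [b /andP[bC wb] _ | none]; last first.
  rewrite [X in _ + X]big1 ?addr0 => [h|x xC]; first by rewrite h eqxx in sC0.
  by have := none x; rewrite xC /= => /negbFE /eqP.
exists a, b; split; last split.
- by rewrite inE in bC.
- by exists (fun x => w 0 x == w 0 a).
- by exists (fun x => w 0 x == w 0 b); exact: (good_bip fs gw wb).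
Qed.

Definition sgn n (C : {set 'I_n}) (col : 'I_n -> bool) : 'rV[algC]_n :=
  \row_x (if x \in C then (if col x then 1 else -1) else 0).

Lemma good_sgn n (f : rel 'I_n) C col : closed_set f C -> bipartite_on f C col ->
  good f (sgn C col).
Proof.
move=> cC bC i j fij; rewrite !mxE.
have := cC i j fij; case iC: (i \in C) => jC; rewrite -jC; last by rewrite addr0.
have := bC i j iC; rewrite -jC => /(_ isT fij).
by case: (col i); case: (col j) => //= _; rewrite ?subrr ?addNr.
Qed.

Lemma sumv_sgn n (C : {set 'I_n}) col :
  sumv (sgn C col) = #|[set x in C | col x]|%:R - #|[set x in C | ~~ col x]|%:R.
Proof.
rewrite -[RHS]mul1r -sum_sign /sumv [RHS]big_mkcond /=.
by apply: eq_bigr => i _; rewrite mxE.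
Qed.

Lemma good_lin n (f : rel 'I_n) (y1 y2 : 'rV[algC]_n) a b :
  good f y1 -> good f y2 -> good f (a *: y1 + b *: y2).
Proof.
move=> g1 g2 i j fij; rewrite !mxE.
have E : a * y1 0 i + b * y2 0 i + (a * y1 0 j + b * y2 0 j)
       = a * (y1 0 i + y1 0 j) + b * (y2 0 i + y2 0 j) by ring.
by rewrite E (g1 _ _ fij) (g2 _ _ fij) !mulr0 addr0.
Qed.

Lemma sgn_self n (f : rel 'I_n) v col : sgn (component f v) col 0 v != 0.
Proof.
rewrite mxE inE connect0; case: (col v); first by rewrite oner_eq0.
by rewrite oppr_eq0 oner_eq0.
Qed.

Definition vec_data n (f : rel 'I_n) :=
  exists S col (y : 'rV[algC]_n), [/\ closed_set f S, bipartite_on f S col,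
     good f y, sumv y = 0 & (y != 0) && (S != set0)].

Lemma data_bal n (e : rel 'I_n) v : simple_graph e ->
  balanced_bipartite_component (compl_graph e) v -> vec_data (compl_graph e).
Proof.
move=> se [c [bc eqc]].
have fs := sym_compl se.
have cC := comp_closed v fs.
exists (component (compl_graph e) v), c, (sgn (component (compl_graph e) v) c).
split => //.
- exact: good_sgn.
- by rewrite sumv_sgn eqc subrr.
- apply/andP; split.
    by apply/eqP => h; have := sgn_self (compl_graph e) v c; rewrite h mxE eqxx.
  by apply/set0Pn; exists v; rewrite inE connect0.
Qed.

Lemma data_two n (e : rel 'I_n) : simple_graph e ->
  has_two_bipartite_components (compl_graph e) -> vec_data (compl_graph e).
Proof.
move=> se [u [v [nc [[cu bu] [cv bv]]]]].
have fs := sym_compl se.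
set f := compl_graph e.
set Cu := component f u; set Cv := component f v.
case: (eqVneq #|[set x in Cu | cu x]| #|[set x in Cu | ~~ cu x]|) => bal.
  by apply: (data_bal (v := u)) => //; exists cu.
have cCu : closed_set f Cu := comp_closed u fs.
have cCv : closed_set f Cv := comp_closed v fs.
set su := sgn Cu cu; set sv := sgn Cv cv.
set A := sumv su; set B := sumv sv.
have A0 : A != 0 by rewrite /A sumv_sgn subr_eq0 eqr_nat.
exists (Cu :|: Cv), (fun x => if x \in Cu then cu x else cv x),
  (B *: su + (- A) *: sv); split.
- move=> i j fij; by rewrite !in_setU (cCu _ _ fij) (cCv _ _ fij).
- move=> x y; rewrite !in_setU => xS yS fxy.
  case xu: (x \in Cu).
    by rewrite -(cCu _ _ fxy) xu; apply: bu; rewrite // -(cCu _ _ fxy).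
  have yu : (y \in Cu) = false by rewrite -(cCu _ _ fxy).
  rewrite yu; rewrite xu /= in xS; rewrite yu /= in yS; exact: bv.
- by apply: good_lin; apply: good_sgn.
- by rewrite sumvD -/A -/B; ring.
- apply/andP; split; last first.
    by apply/set0Pn; exists u; rewrite in_setU inE connect0.
  apply/eqP => h.
  have : (B *: su + (- A) *: sv) 0 v = 0 by rewrite h mxE.
  rewrite !mxE.
  have -> : (v \in Cu) = false by rewrite inE; apply/negbTE.
  rewrite mulr0 add0r => /eqP; rewrite mulf_eq0 oppr_eq0 (negbTE A0) /=.
  by apply/negP; have := sgn_self f v cv; rewrite mxE.
Qed.

Lemma nrm_gt0 n (u : 'rV[algC]_n) : u != 0 -> 0 < nrm u.
Proof.
move=> u0; have [k uk] := nonzero_entry u0.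
rewrite nrmE (bigD1 k) //=; apply: ltr_pwDl; first by rewrite mul_conjC_gt0.
by rewrite sumr_ge0 // => i _; rewrite mul_conjC_ge0.
Qed.

Lemma two_weak (c l1 l2 p q : algC) : c <= l1 -> c <= l2 -> 0 <= p -> 0 <= q ->
  c * (p + q) <= l1 * p + l2 * q.
Proof.
move=> h1 h2 hp hq; rewrite -subr_ge0.
have -> : l1 * p + l2 * q - c * (p + q) = (l1 - c) * p + (l2 - c) * q by ring.
by rewrite addr_ge0 // mulr_ge0 // subr_ge0.
Qed.

Lemma two_strict (c l1 l2 p q : algC) : c < l1 -> c < l2 -> 0 <= p -> 0 <= q ->
  0 < p + q -> c * (p + q) < l1 * p + l2 * q.
Proof.
move=> h1 h2 hp hq hpq; rewrite -subr_gt0.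
have -> : l1 * p + l2 * q - c * (p + q) = (l1 - c) * p + (l2 - c) * q by ring.
move: hp; rewrite le_eqVlt => /orP[/eqP p0|pp].
  move: hpq; rewrite -p0 add0r mulr0 add0r => qp.
  by rewrite mulr_gt0 // subr_gt0.
apply: ltr_pwDl; first by rewrite mulr_gt0 // subr_gt0.
by rewrite mulr_ge0 // subr_ge0 ltW.
Qed.

Lemma upper_none n (e : rel 'I_n) : simple_graph e -> (0 < n)%N ->
  ~ (exists i j, [/\ i != j,
       (n%:R - 2) < spectral_diag (signless_laplacian e) 0 i
     & (n%:R - 2) < spectral_diag (signless_laplacian e) 0 j]).
Proof.
move=> se n0 [i [j [ij ci cj]]].
have H := lap_herm (proj2 se).
have fs := sym_compl se.
have [u [a [b [u0 su qfu nu]]]] := spec_two_upper H ij.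
have suv : sumv u = 0 := su.
have h2 := qf_lap u se n0.
rewrite suv mul0r add0r in h2.
have lt : (n%:R - 2) * nrm u < qf (signless_laplacian e) u.
  rewrite qfu nu; apply: two_strict; rewrite ?mul_conjC_ge0 //.
  by rewrite -nu nrm_gt0.
move: lt; rewrite h2 -subr_gt0 addrAC subrr add0r oppr_gt0.
by move=> h; have := lt_le_trans h (qf_ge0 u fs); rewrite ltxx.
Qed.

Lemma theorem1_aux (n : nat) (e : rel 'I_n) :
  simple_graph e -> (2 <= n)%N ->
  (qeig e 2 = (n%:R - 2)%R :> algC <->
   (exists v, balanced_bipartite_component (compl_graph e) v) \/
   has_two_bipartite_components (compl_graph e)).
Proof.
move=> se n2.
have n0 : (0 < n)%N by apply: leq_trans n2.
have cR : ((n%:R - 2)%R : algC) \is Num.real by rewrite rpredB ?realn.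
have H := lap_herm (proj2 se).
have fs := sym_compl se.
apply: iff_trans; first exact: (qspec_nth1 H cR n2).
split.
- move=> [[i [j [ij ci cj]]] _].
  have [u [a [b [u0 su qfu nu]]]] := spec_two_upper H ij.
  have suv : sumv u = 0 := su.
  apply: (from_vec se u0 _ suv).
  apply: (qf_eq0_good fs).
  have h1 : ((n%:R - 2) * nrm u <= qf (signless_laplacian e) u)%R.
    by rewrite qfu nu; apply: two_weak; rewrite ?mul_conjC_ge0.
  have h2 := qf_lap u se n0.
  rewrite suv GRing.mul0r GRing.add0r in h2.
  move: h1; rewrite h2 -subr_ge0 addrAC subrr add0r oppr_ge0 => h3.
  by apply/eqP; rewrite eq_le h3 qf_ge0.
- move=> cond; split; last exact: upper_none.
  have [S [col [y [cS bS gy sy /andP[y0 S0]]]]] : vec_data (compl_graph e).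
    by case: cond => [[v hv]|h]; [exact: data_bal hv | exact: data_two].
  apply: (spec_two_lower H cR (x := ind S) (y := y)); last first.
    by move=> a b; apply: (lower_bound se n0 cS bS gy sy).
  move=> a b h.
  have hs := congr1 (@sumv n) h.
  rewrite sumvD sy GRing.mulr0 GRing.addr0 sumv_ind in hs.
  have s0 : (sumv (0 : 'rV[algC]_n) = 0)%R.
    by rewrite /sumv big1 // => i _; rewrite mxE.
  rewrite s0 in hs.
  have a0 : a = 0%R.
    apply/eqP; move: hs => /eqP; rewrite mulf_eq0 pnatr_eq0 => /orP[//|].
    by rewrite cards_eq0 (negbTE S0).
  split => //.
  move: h; rewrite a0 scale0r add0r => /eqP; rewrite scaler_eq0 (negbTE y0) orbF.
  by move/eqP.
Qed.

Local Close Scope sesquilinear_scope.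
Local Close Scope ring_scope.

Theorem theorem1 (n : nat) (e : rel 'I_n) :
  simple_graph e -> (2 <= n)%N ->
  (qeig e 2 = (n%:R - 2)%R :> algC <->
   (exists v, balanced_bipartite_component (compl_graph e) v) \/
   has_two_bipartite_components (compl_graph e)).
Proof. exact: theorem1_aux. Qed.
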